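(* Let $K$ be a field, $S=K[x_1,\dots,x_n]$, $A\subseteq\{1,\dots,n\}$, $f=\prod_{j\in A}x_j$, and let $J\subset I\subset S$ be monomial ideals. Then $$\operatorname{fdepth} I/J\le \operatorname{fdepth}(I/J)_f.$$
   Context: $S_f=K[x_1,\dots,x_n,x_j^{-1}:j\in A]$ and $(I/J)_f=IS_f/JS_f$. Let $R$ be $S$ or $S_f$ and $J\subset I\subset R$ monomial ideals (ideals generated by monomials). A prime filtration of $I/J$ is a chain $\mathcal F: J=J_0\subset J_1\subset\cdots\subset J_r=I$ of monomial ideals of $R$ such that $J_i/J_{i-1}\cong (R/P_i)(-a_i)$ as $\mathbb Z^n$-graded modules, with $a_i\in\mathbb Z^n$ and each $P_i$ a monomial prime ideal of $R$. The support of $\mathcal F$ is $\operatorname{Supp}(\mathcal F)=\{P_1,\dots,P_r\}$, $\operatorname{fdepth}\mathcal F=\min\{\dim R/P: P\in\operatorname{Supp}(\mathcal F)\}$, and $\operatorname{fdepth} I/J$ is the maximum of $\operatorname{fdepth}\mathcal F$ over all prime filtrations $\mathcal F$ of $I/J$. *)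

(* Defs.v *)
From mathcomp Require Import all_boot all_order all_algebra.
From mathcomp Require Import boolp.
Set Implicit Arguments. Unset Strict Implicit. Unset Printing Implicit Defensive.
Import Order.TTheory GRing.Theory Num.Theory.

(* A (Laurent) monomial x^a of K[x_1..x_n, x_j^-1 : j in A] is its exponent
   vector a : 'I_n -> int.  R_A := K[x_1..x_n, x_j^-1 : j in A]
   (so R_set0 = S and R_A = S_f with f = prod_{j in A} x_j).
   A monomial ideal of R_A is the K-span of the monomials it contains, hence
   is determined by the set of their exponents. *)

Definition mono (n : nat) := 'I_n -> int.

Definition inR (n : nat) (A : {set 'I_n}) (b : mono n) : Prop :=
  forall j, j \notin A -> (0 <= b j)%R.

Definition mideal (n : nat) (A : {set 'I_n}) (I : mono n -> Prop) : Prop :=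
  (forall a, I a -> inR A a) /\
  (forall a b c, I a -> inR A b -> (forall j, c j = (a j + b j)%R) -> I c).

(* Extension I R_A of a monomial ideal I (of S) to R_A = S_f. *)
Definition loc (n : nat) (A : {set 'I_n}) (I : mono n -> Prop) : mono n -> Prop :=
  fun c => exists a b, I a /\ inR A b /\ (forall j, c j = (a j + b j)%R).

(* The monomial prime ideal P_Q = (x_j : j in Q) of R_A is a proper (prime)
   ideal iff Q does not meet A.  Monomial exponents of the Z^n-graded module
   R_A / P_Q : *)
Definition quot_deg (n : nat) (A Q : {set 'I_n}) (b : mono n) : Prop :=
  (forall j, j \in Q -> b j = 0%R) /\ (forall j, j \notin A -> (0 <= b j)%R).

(* dim R_A / P_Q = n - |Q|  (for Q disjoint from A). *)
Definition dimq (n : nat) (Q : {set 'I_n}) : nat := (n - #|Q|)%N.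

(* Prime filtration J = Js 0 ⊆ Js 1 ⊆ ... ⊆ Js r = I of I/J over R_A with
   Js i / Js (i-1) ≅ (R_A / P_(Qs i))(- as_ i) as Z^n-graded modules.
   For monomial ideals, the quotient Js i / Js (i-1) is the Z^n-graded module
   with K-basis the monomials of Js i not in Js (i-1), and x_k acting as
   multiplication (or 0 if the product lands in Js (i-1)); it is isomorphic to
   the shift (R_A/P_Q)(-a) exactly when those exponents are a + (exponents of
   R_A/P_Q). *)
Definition prime_filtration (n : nat) (A : {set 'I_n}) (J I : mono n -> Prop)
  (r : nat) (Js : nat -> mono n -> Prop) (Qs : nat -> {set 'I_n})
  (as_ : nat -> mono n) : Prop :=
  [/\ (forall c, Js 0%N c <-> J c) /\ (forall c, Js r c <-> I c),
      forall i, (i <= r)%N -> mideal A (Js i),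
      forall i, (0 < i <= r)%N -> forall c, Js i.-1 c -> Js i c,
      forall i, (0 < i <= r)%N -> Qs i :&: A = set0 &
      forall i, (0 < i <= r)%N -> forall c,
        (Js i c /\ ~ Js i.-1 c) <-> quot_deg A (Qs i) (fun j => (c j - as_ i j)%R)].

(* fdepth of a filtration: min of dim R/P over its support (n if empty,
   which plays the role of +infinity since every dim R/P <= n). *)
Definition filt_fdepth (n : nat) (r : nat) (Qs : nat -> {set 'I_n}) : nat :=
  \big[minn/n]_(1 <= i < r.+1) dimq (Qs i).

Definition fdepth (n : nat) (A : {set 'I_n}) (J I : mono n -> Prop) : nat :=
  \max_(k < n.+1 | `[< exists r Js Qs as_,
          prime_filtration A J I r Js Qs as_ /\ @filt_fdepth n r Qs = k >]) k.

(* Main.v *)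
Require Import Defs.
From mathcomp Require Import all_boot all_order all_algebra.
From mathcomp Require Import boolp.
From mathcomp Require Import zify.
Set Implicit Arguments. Unset Strict Implicit. Unset Printing Implicit Defensive.
Import Order.TTheory GRing.Theory Num.Theory.

Definition sh n (A : {set 'I_n}) (c : mono n) (t : nat) : mono n :=
  fun j => (c j + (if j \in A then Posz t else 0))%R.

Lemma inR0 n (b : mono n) : inR set0 b <-> forall j, (0 <= b j)%R.
Proof. split => H j; [apply: H; by rewrite in_set0 | move=> _; exact: H]. Qed.

Lemma sh_up n (A : {set 'I_n}) (X : mono n -> Prop) c t t' :
  mideal set0 X -> X (sh A c t) -> (t <= t')%N -> X (sh A c t').
Proof.
move=> [_ HX] Ht le.
apply: (HX _ (fun j => if j \in A then Posz (t' - t) else 0%R) _ Ht).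
  by apply/inR0 => j; case: (j \in A).
move=> j; rewrite /sh; case: (j \in A) => /=; lia.
Qed.

Lemma sum_ge n (b : mono n) j : (`|b j| <= \sum_(i < n) `|b i|)%N.
Proof. by rewrite (bigD1 j) //= leq_addr. Qed.

Lemma locP n (A : {set 'I_n}) (X : mono n -> Prop) c :
  mideal set0 X -> (loc A X c <-> exists t, X (sh A c t)).
Proof.
move=> [HX1 HX] ; split.
  move=> [a [b [Ha [Hb Hc]]]].
  exists (\sum_(i < n) `|b i|)%N.
  apply: (HX a (fun j => b j + (if j \in A then Posz (\sum_(i < n) `|b i|)%N else 0))%R _ Ha).
    apply/inR0 => j; have := sum_ge b j; case: (boolP (j \in A)) => jA /=.
      lia.
    have := Hb j jA; lia.
  move=> j; rewrite /sh Hc; lia.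
move=> [t Ht]; exists (sh A c t), (fun j => if j \in A then - Posz t else 0)%R.
split=> //; split.
  by move=> j /negbTE ->.
move=> j; rewrite /sh; case: (j \in A) => /=; lia.
Qed.

Lemma loc_mono n (A : {set 'I_n}) (X Y : mono n -> Prop) c :
  (forall d, X d -> Y d) -> loc A X c -> loc A Y c.
Proof. by move=> H [a [b [Ha Hb]]]; exists a, b; split=> //; apply: H. Qed.

Lemma loc_ext n (A : {set 'I_n}) (X Y : mono n -> Prop) c :
  (forall d, X d <-> Y d) -> loc A X c <-> loc A Y c.
Proof. by move=> H; split; apply: loc_mono => d /H. Qed.

Lemma mideal_ext n (A : {set 'I_n}) (X Y : mono n -> Prop) :
  (forall d, X d <-> Y d) -> mideal A X -> mideal A Y.
Proof.
move=> H [H1 H2]; split; first by move=> a /H /H1.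
by move=> a b c /H Ha Hb Hc; apply/H; apply: H2 Ha Hb Hc.
Qed.

Lemma mideal_loc n (A : {set 'I_n}) (X : mono n -> Prop) :
  mideal set0 X -> mideal A (loc A X).
Proof.
move=> [H1 H2]; split.
  move=> c [a [b [Ha [Hb Hc]]]] j jA; rewrite Hc.
  have := H1 a Ha j; rewrite in_set0 => /(_ isT); have := Hb j jA; lia.
move=> c b d [a [b1 [Ha [Hb1 Hc]]]] Hb Hd.
exists a, (fun j => b1 j + b j)%R; split=> //; split.
  move=> j jA; have := Hb j jA; have := Hb1 j jA; lia.
move=> j; rewrite Hd Hc; lia.
Qed.

Lemma QnA n (Q A : {set 'I_n}) j : Q :&: A = set0 -> j \in Q -> j \notin A.
Proof.
move=> H jQ; apply/negP => jA.
by have := in_setI j Q A; rewrite H in_set0 jQ jA.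
Qed.

Lemma step_loc n (A : {set 'I_n}) (Y Z : mono n -> Prop) Q (a : mono n) :
  mideal set0 Y -> mideal set0 Z -> (forall c, Y c -> Z c) -> Q :&: A = set0 ->
  (forall c, (Z c /\ ~ Y c) <-> quot_deg set0 Q (fun j => (c j - a j)%R)) ->
  forall c, (loc A Z c /\ ~ loc A Y c) <-> quot_deg A Q (fun j => (c j - a j)%R).
Proof.
move=> HY HZ YZ QA Hs c; split.
  move=> [/(locP _ _ HZ) [t Ht] NY].
  have NY' : ~ Y (sh A c t) by move=> Hy; apply: NY; apply/(locP _ _ HY); exists t.
  have [H1 H2] := proj1 (Hs _) (conj Ht NY').
  split.
    move=> j jQ; have := H1 j jQ; rewrite /sh (negbTE (QnA QA jQ)); lia.
  move=> j jA; have := H2 j; rewrite in_set0 /sh (negbTE jA) => /(_ isT); lia.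
move=> [H1 H2].
set t := (\sum_(i < n) `|c i - a i|)%N.
have key : forall t', (t <= t')%N -> quot_deg set0 Q (fun j => (sh A c t' j - a j)%R).
  move=> t' le; split.
    move=> j jQ; have := H1 j jQ; rewrite /sh (negbTE (QnA QA jQ)); lia.
  move=> j _; rewrite /sh; case: (boolP (j \in A)) => jA.
    have := sum_ge (fun i => c i - a i)%R j; rewrite -/t; lia.
  have := H2 j jA; lia.
have [Zt NYt] := proj2 (Hs _) (key t (leqnn t)).
split; first by apply/(locP _ _ HZ); exists t.
move=> /(locP _ _ HY) [s Hs'].
have Ys : Y (sh A c (s + t)) by apply: (sh_up HY Hs'); apply: leq_addr.
have [_ NY] := proj2 (Hs _) (key (s + t)%N (leq_addl _ _)).
exact: NY.
Qed.

Lemma step_loc_triv n (A : {set 'I_n}) (Y Z : mono n -> Prop) Q (a : mono n) :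
  mideal set0 Y -> mideal set0 Z -> (forall c, Y c -> Z c) -> Q :&: A != set0 ->
  (forall c, (Z c /\ ~ Y c) <-> quot_deg set0 Q (fun j => (c j - a j)%R)) ->
  forall c, loc A Z c <-> loc A Y c.
Proof.
move=> HY HZ YZ QA Hs c; split; last exact: loc_mono.
case/set0Pn: QA => j0; rewrite in_setI => /andP [j0Q j0A].
move=> /(locP _ _ HZ) [t Ht]; apply/(locP _ _ HY).
have Z1 := sh_up HZ Ht (leqnSn t).
have Z2 := sh_up HZ Ht (leq_trans (leqnSn t) (leqnSn t.+1)).
case: (pselect (Y (sh A c t.+1))) => Y1; first by exists t.+1.
case: (pselect (Y (sh A c t.+2))) => Y2; first by exists t.+2.
have [E1 _] := proj1 (Hs _) (conj Z1 Y1).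
have [E2 _] := proj1 (Hs _) (conj Z2 Y2).
have := E1 j0 j0Q; have := E2 j0 j0Q; rewrite /sh j0A; lia.
Qed.

Lemma fd_rec n r (Qs : nat -> {set 'I_n}) :
  filt_fdepth r.+1 Qs = minn (filt_fdepth r Qs) (dimq (Qs r.+1)).
Proof.
rewrite /filt_fdepth /index_iota !subSS !subn0.
rewrite -(addn1 r) iotaD add1n addn1.
have hF : forall i, (dimq (Qs i) <= n)%N by move=> i; rewrite /dimq leq_subr.
elim: (iota 1 r) => [|y s IH].
  by rewrite /= !big_cons !big_nil minnC.
by rewrite /= !big_cons IH minnA.
Qed.

Lemma fd_ext n r (Qs Qs' : nat -> {set 'I_n}) :
  (forall i, (i < r.+1)%N -> Qs i = Qs' i) -> filt_fdepth r Qs = filt_fdepth r Qs'.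
Proof. move=> H; rewrite /filt_fdepth; apply: eq_big_nat => i /andP [_ lt].
by rewrite H. Qed.

Lemma fd_le n r (Qs : nat -> {set 'I_n}) : (filt_fdepth r Qs <= n)%N.
Proof. elim: r => [|r IH]; first by rewrite /filt_fdepth big_geq.
by rewrite fd_rec geq_min IH. Qed.

Lemma loc_filt n (A : {set 'I_n}) r : forall (J I : mono n -> Prop) Js Qs as_,
  prime_filtration set0 J I r Js Qs as_ ->
  exists r' Js' Qs' as', prime_filtration A (loc A J) (loc A I) r' Js' Qs' as'
    /\ (filt_fdepth r Qs <= filt_fdepth r' Qs')%N.
Proof.
elim: r => [|r IH] J I Js Qs as_ [[P0 Pr] Hm Hinc Hd Hs].
  exists 0%N, (fun _ => loc A (Js 0%N)), Qs, as_; split; last by [].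
  split.
  - split=> c; first exact: loc_ext.
    exact: loc_ext.
  - move=> i _; apply: mideal_loc; exact: Hm.
  - by move=> i /andP [/gtn_eqF]; case: i.
  - by move=> i /andP [/gtn_eqF]; case: i.
  - by move=> i /andP [/gtn_eqF]; case: i.
have H' : prime_filtration set0 J (Js r) r Js Qs as_.
  split=> //.
  - by move=> i le; apply: Hm; apply: leqW.
  - by move=> i /andP [i0 le]; apply: Hinc; rewrite i0 leqW.
  - by move=> i /andP [i0 le]; apply: Hd; rewrite i0 leqW.
  - by move=> i /andP [i0 le]; apply: Hs; rewrite i0 leqW.
have [r' [Js' [Qs' [as' [[[P0' Pr'] Hm' Hinc' Hd' Hs'] fd]]]]] := IH _ _ _ _ _ H'.
have Hr1 : (0 < r.+1 <= r.+1)%N by rewrite /= leqnn.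
have HmY := Hm r (leqnSn r).
have HmZ := Hm r.+1 (leqnn _).
have YZ := Hinc r.+1 Hr1.
rewrite fd_rec.
case: (boolP (Qs r.+1 :&: A == set0)) => QA; last first.
  exists r', Js', Qs', as'; split; last by rewrite geq_min fd.
  split=> //; split=> // c.
  rewrite Pr'; rewrite -(step_loc_triv HmY HmZ YZ QA (Hs _ Hr1)).
  by apply: loc_ext.
move/eqP: QA => QA.
exists r'.+1, (fun i => if (i <= r')%N then Js' i else loc A (Js r.+1)),
  (fun i => if i == r'.+1 then Qs r.+1 else Qs' i),
  (fun i => if i == r'.+1 then as_ r.+1 else as' i); split; last first.
  rewrite fd_rec eqxx leq_min geq_minr andbT.
  rewrite (@fd_ext _ r' _ Qs'); first by rewrite geq_min fd.
  by move=> i lt; rewrite (ltn_eqF lt).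
split.
- split=> c; first by rewrite leq0n.
  rewrite ltnn; exact: loc_ext.
- move=> i le; case: ifP => ir; first exact: Hm'.
  exact: mideal_loc.
- move=> i /andP [i0 le] c /=; case: (boolP (i <= r')%N) => ir.
    rewrite (leq_trans (leq_pred i) ir); apply: Hinc'; by rewrite i0.
  have -> : i = r'.+1 by apply/eqP; rewrite eqn_leq le ltnNge ir.
  rewrite /= leqnn => /Pr'; apply: loc_mono; exact: YZ.
- move=> i /andP [i0 le]; case: ifP => [_ //|].
  move=> ir; apply: Hd'; rewrite i0 /=.
  by move: le; rewrite leq_eqVlt ir.
- move=> i /andP [i0 le] c /=; case: (boolP (i <= r')%N) => ir.
    rewrite (leq_trans (leq_pred i) ir) (ltn_eqF (ir : i < r'.+1)%N).
    apply: Hs'; by rewrite i0.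
  have Ei : i = r'.+1 by apply/eqP; rewrite eqn_leq le ltnNge ir.
  rewrite Ei /= eqxx leqnn.
  rewrite -(step_loc HmY HmZ YZ QA (Hs _ Hr1)).
  by split=> [[a b]|[a b]]; split=> //; [move/Pr' | move=> /Pr'].
Qed.

Theorem theorem5p1 (n : nat) (A : {set 'I_n}) (J I : mono n -> Prop) :
  mideal set0 J -> mideal set0 I -> (forall a, J a -> I a) ->
  (fdepth set0 J I <= fdepth A (loc A J) (loc A I))%N.
Proof.
move=> _ _ _; rewrite /fdepth.
apply/bigmax_leqP => k /asboolP [r [Js [Qs [as_ [F <-]]]]].
have [r' [Js' [Qs' [as' [F' le]]]]] := loc_filt A F.
apply: (leq_trans le).
have lt : (filt_fdepth r' Qs' < n.+1)%N by rewrite ltnS fd_le.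
apply: (@leq_bigmax_cond _ _ _ (Ordinal lt)) => /=.
by apply/asboolP; exists r', Js', Qs', as'.
Qed.
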